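(* Let $N\ge3$ and $p>1$. For $\gamma>0$ let $R(\gamma)$ be the first positive zero of the solution $u(\cdot,\gamma)$ of (IVP$_\gamma$). Then $R(\gamma)\to\infty$ as $\gamma\downarrow0$.
   Context: $A(r)=\frac{2}{1+r^2}$, $p_{\rm S}=\frac{N+2}{N-2}$, $q=\frac{N-2}{2}(p-p_{\rm S})$. (IVP$_\gamma$): $u''+\frac{N-1}{r}u'+\frac{N(N-2)}{4}A(r)^2u+A(r)^{-q}|u|^{p-1}u=0$ on $(0,\infty)$, $u(0)=\gamma$, $u'(0)=0$. *)

(* Defs.v *)
From Stdlib Require Import Reals Lra.
Open Scope R_scope.

Definition Aw (r : R) : R := 2 / (1 + r ^ 2).

Definition pS (N : nat) : R := (INR N + 2) / (INR N - 2).

Definition qexp (N : nat) (p : R) : R := (INR N - 2) / 2 * (p - pS N).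

(* |u|^{p-1} u  (Rpower (Rabs 0) _ * 0 = 0, so the convention at u = 0 is harmless) *)
Definition powsgn (p u : R) : R := Rpower (Rabs u) (p - 1) * u.

Definition is_IVP_solution (N : nat) (p gamma : R) (u : R -> R) : Prop :=
  u 0 = gamma /\
  limit1_in (fun h => (u h - u 0) / h) (fun h => 0 < h) 0 0 /\
  exists u1 u2 : R -> R,
    forall r, 0 < r ->
      derivable_pt_lim u r (u1 r) /\
      derivable_pt_lim u1 r (u2 r) /\
      u2 r + (INR N - 1) / r * u1 r
        + INR N * (INR N - 2) / 4 * (Aw r) ^ 2 * u r
        + Rpower (Aw r) (- qexp N p) * powsgn p (u r) = 0.

(* Main.v *)
Require Import Defs.
From Stdlib Require Import Reals Lra Lia.
From Coquelicot Require Import Coquelicot.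
Open Scope R_scope.

Definition wf (N : nat) (r : R) : R := exp (-(INR N - 2)/2 * ln (1 + r^2)).
Definition w1f (N : nat) (r : R) : R := -(INR N - 2) * r * wf N r / (1 + r^2).
Definition w2f (N : nat) (r : R) : R :=
  -(INR N - 2) * wf N r / (1 + r^2) - (INR N - 2) * r * w1f N r / (1 + r^2)
  + (INR N - 2) * r * wf N r * (2 * r) / (1 + r^2)^2.

Lemma P_pos r : 0 < 1 + r^2.
Proof. nra. Qed.

Lemma w_deriv N r : derivable_pt_lim (wf N) r (w1f N r).
Proof.
  apply is_derive_Reals. unfold wf, w1f.
  auto_derive. { pose proof (P_pos r); lra. }
  pose proof (P_pos r). replace (1 + r*(r*1)) with (1+r^2) by ring. unfold wf. change (@eq R ?a ?b) with (@eq R a b). field. lra.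
Qed.

Lemma w1_deriv N r : derivable_pt_lim (w1f N) r (w2f N r).
Proof.
  apply is_derive_Reals. unfold w2f, w1f, wf.
  auto_derive. { pose proof (P_pos r); lra. }
  pose proof (P_pos r). replace (1 + r*(r*1)) with (1+r^2) by ring. field. lra.
Qed.

Lemma w_ode N r : 0 < r ->
  w2f N r + (INR N - 1) / r * w1f N r + INR N * (INR N - 2) / 4 * (Aw r)^2 * wf N r = 0.
Proof.
  intros Hr. unfold w2f, w1f, Aw. pose proof (P_pos r). field. lra.
Qed.

Definition Wf (N : nat) (u u1 : R -> R) (r : R) : R :=
  r ^ (N - 1) * (wf N r * u1 r - u r * w1f N r).

Lemma W_deriv N p (u u1 u2 : R -> R) r : (3 <= N)%nat -> 0 < r ->
  derivable_pt_lim u r (u1 r) -> derivable_pt_lim u1 r (u2 r) ->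
  u2 r + (INR N - 1) / r * u1 r
        + INR N * (INR N - 2) / 4 * (Aw r) ^ 2 * u r
        + Rpower (Aw r) (- qexp N p) * powsgn p (u r) = 0 ->
  derivable_pt_lim (Wf N u u1) r
    (- r ^ (N - 1) * Rpower (Aw r) (- qexp N p) * powsgn p (u r) * wf N r).
Proof.
  intros HN Hr Hu Hu1 Hode.
  apply is_derive_Reals in Hu. apply is_derive_Reals in Hu1.
  pose proof (proj2 (is_derive_Reals _ _ _) (w_deriv N r)) as Hw.
  pose proof (proj2 (is_derive_Reals _ _ _) (w1_deriv N r)) as Hw1.
  apply is_derive_Reals.
  assert (Hp : is_derive (fun x => x ^ (N - 1)) r (INR (N-1) * 1 * r ^ Nat.pred (N - 1))).
  { apply (is_derive_pow (fun x => x)). apply (is_derive_id r). }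
  pose proof (is_derive_mult _ _ _ _ _ Hw Hu1 ltac:(intros; apply Rmult_comm)) as H1.
  pose proof (is_derive_mult _ _ _ _ _ Hu Hw1 ltac:(intros; apply Rmult_comm)) as H2.
  pose proof (is_derive_minus _ _ _ _ _ H1 H2) as H3.
  pose proof (is_derive_mult _ _ _ _ _ Hp H3 ltac:(intros; apply Rmult_comm)) as H4.
  unfold Wf.
  replace (- r ^ (N - 1) * Rpower (Aw r) (- qexp N p) * powsgn p (u r) * wf N r)
    with (plus (mult (INR (N - 1) * 1 * r ^ Nat.pred (N - 1))
                ((fun x => minus (mult (wf N x) (u1 x)) (mult (u x) (w1f N x))) r))
              (mult (r ^ (N - 1))
                (minus (plus (mult (w1f N r) (u1 r)) (mult (wf N r) (u2 r)))
                       (plus (mult (u1 r) (w1f N r)) (mult (u r) (w2f N r)))))).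
  - exact H4.
  - simpl. unfold plus, mult, minus, opp; simpl. unfold Rminus.
    pose proof (w_ode N r Hr) as Hwo.
    assert (Hpr : r ^ (N - 1) = r * r ^ Nat.pred (N - 1)).
    { replace (N - 1)%nat with (S (Nat.pred (N - 1))) at 1 by lia. reflexivity. }
    assert (HI : INR (N - 1) = INR N - 1).
    { rewrite minus_INR by lia. simpl. ring. }
    rewrite HI, Hpr.
    set (F := Rpower (Aw r) (- qexp N p) * powsgn p (u r)) in *.
    set (q := r ^ Nat.pred (N - 1)).
    assert (Hu2 : u2 r = - ((INR N - 1) / r * u1 r
        + INR N * (INR N - 2) / 4 * (Aw r) ^ 2 * u r + F)) by lra.
    assert (Hw2 : w2f N r = - ((INR N - 1) / r * w1f N r
        + INR N * (INR N - 2) / 4 * (Aw r) ^ 2 * wf N r)) by lra.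
    rewrite Hu2, Hw2. repeat (unfold plus, mult, minus, opp; simpl). change (@eq R ?a ?b) with (@eq R a b). unfold F. clear Hu2 Hw2 Hode. field. lra.
Qed.

Lemma cont_eps f x l : derivable_pt_lim f x l ->
  forall eta, 0 < eta -> exists d, 0 < d /\ forall s, Rabs (s - x) < d -> Rabs (f s - f x) < eta.
Proof.
  intros H eta Heta.
  assert (C : continuity_pt f x) by (apply derivable_continuous_pt; exists l; exact H).
  destruct (C eta Heta) as [d [Hd Hs]]. exists d; split; auto.
  intros s Hsd. destruct (Req_dec s x) as [->|Hne].
  - rewrite Rminus_diag, Rabs_R0; auto.
  - apply (Hs s). split. split. exact I. auto. exact Hsd.
Qed.

Lemma ln_le a b : 0 < a -> a <= b -> ln a <= ln b.
Proof. intros Ha Hab. destruct (Req_dec a b) as [->|Hn]. lra.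
  left. apply ln_increasing; lra. Qed.

Lemma exp_le a b : a <= b -> exp a <= exp b.
Proof. intros Hab. destruct (Req_dec a b) as [->|Hn]. lra.
  left. apply exp_increasing; lra. Qed.

Lemma ln_le_x x : 0 < x -> ln x <= x - 1.
Proof. intros Hx. pose proof (exp_ineq1_le (x - 1)).
  destruct (Rle_lt_dec (ln x) (x - 1)) as [h|h]; auto.
  pose proof (exp_increasing _ _ h). rewrite exp_ln in H0 by lra. lra. Qed.

Lemma w_pos N r : 0 < wf N r.
Proof. apply exp_pos. Qed.

Lemma ln1p_nonneg r : 0 <= ln (1 + r^2).
Proof. rewrite <- ln_1. apply ln_le; nra. Qed.

Lemma w_le1 N r : (2 <= N)%nat -> wf N r <= 1.
Proof. intros HN. unfold wf. apply Rle_trans with (exp 0); [apply exp_le | rewrite exp_0; lra].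
  pose proof (ln1p_nonneg r). assert (2 <= INR N) by (replace 2 with (INR 2) by (simpl; ring); apply le_INR; auto).
  assert (0 <= (INR N - 2)/2) by lra.
  assert (0 <= (INR N - 2)/2 * ln(1+r^2)) by (apply Rmult_le_pos; lra).
  replace (-(INR N - 2)/2 * ln (1+r^2)) with (-((INR N - 2)/2 * ln (1+r^2))) by field. lra. Qed.

Lemma w_lower N M r : (2 <= N)%nat -> 0 <= r <= M ->
  exp (-(INR N - 2)/2 * ln (1 + M^2)) <= wf N r.
Proof. intros HN Hr. unfold wf. apply exp_le.
  assert (2 <= INR N) by (replace 2 with (INR 2) by (simpl; ring); apply le_INR; auto).
  assert (ln (1 + r^2) <= ln (1 + M^2)) by (apply ln_le; nra).
  assert (0 <= (INR N - 2)/2) by lra.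
  replace (-(INR N - 2)/2 * ln (1+r^2)) with (-((INR N - 2)/2 * ln (1+r^2))) by field.
  replace (-(INR N - 2)/2 * ln (1+M^2)) with (-((INR N - 2)/2 * ln (1+M^2))) by field.
  apply Ropp_le_contravar. apply Rmult_le_compat_l; lra. Qed.

Lemma w_near1 N h : (2 <= N)%nat -> 1 - wf N h <= (INR N - 2)/2 * h^2.
Proof. intros HN. unfold wf.
  pose proof (exp_ineq1_le (-(INR N - 2)/2 * ln (1 + h^2))).
  assert (2 <= INR N) by (replace 2 with (INR 2) by (simpl; ring); apply le_INR; auto).
  pose proof (ln_le_x (1 + h^2) ltac:(nra)).
  assert (0 <= (INR N - 2)/2) by lra.
  replace (-(INR N - 2)/2 * ln (1+h^2)) with (-((INR N - 2)/2 * ln (1+h^2))) in H by field.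
  replace (-(INR N - 2)/2 * ln (1+h^2)) with (-((INR N - 2)/2 * ln (1+h^2))) by field.
  assert ((INR N - 2)/2 * ln (1+h^2) <= (INR N - 2)/2 * h^2) by (apply Rmult_le_compat_l; lra).
  lra. Qed.

Lemma K_bound N p M c : 0 < c <= M ->
  Rpower (Aw c) (- qexp N p) <= exp (Rabs (qexp N p) * (ln 2 + ln (1 + M^2))).
Proof. intros Hc. unfold Rpower. apply exp_le.
  assert (HA : ln (Aw c) = ln 2 - ln (1 + c^2)).
  { unfold Aw, Rdiv. rewrite ln_mult by (try lra; apply Rinv_0_lt_compat; nra). rewrite ln_Rinv by nra. ring. }
  rewrite HA.
  assert (0 < ln 2) by (pose proof ln_lt_2; lra).
  pose proof (ln1p_nonneg c).
  assert (ln (1 + c^2) <= ln (1 + M^2)) by (apply ln_le; nra).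
  set (q := qexp N p).
  assert (Rabs (ln 2 - ln (1 + c^2)) <= ln 2 + ln (1 + M^2)) by (apply Rabs_le; lra).
  assert (- q * (ln 2 - ln (1 + c^2)) <= Rabs q * Rabs (ln 2 - ln (1 + c^2))).
  { rewrite <- Rabs_mult. rewrite <- Rabs_Ropp. replace (- (q * (ln 2 - ln (1 + c ^ 2)))) with (- q * (ln 2 - ln (1 + c^2))) by ring. apply Rle_abs. }
  pose proof (Rabs_pos q). nra.
Qed.

Lemma le_eps a b : (forall eta, 0 < eta -> a <= eta + b) -> a <= b.
Proof. intros H. destruct (Rle_lt_dec a b); auto.
  specialize (H ((a - b)/2) ltac:(lra)). lra. Qed.

Lemma lim_u (u : R -> R) g :
  limit1_in (fun h => (u h - u 0) / h) (fun h => 0 < h) 0 0 -> u 0 = g ->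
  forall e, 0 < e -> exists a, 0 < a /\ forall h, 0 < h < a -> Rabs (u h - g) < e * h.
Proof.
  intros Hl Hu0 e He. unfold limit1_in, limit_in in Hl. simpl in Hl. unfold R_dist in Hl.
  destruct (Hl e He) as [a [Ha Hh]]. exists a; split; auto.
  intros h [h0 ha]. assert (Hx : Rabs ((u h - u 0) / h - 0) < e).
  { apply Hh. split; auto. rewrite Rminus_0_r, Rabs_right; lra. }
  rewrite Rminus_0_r, Hu0 in Hx.
  unfold Rdiv in Hx. rewrite Rabs_mult, Rabs_inv, (Rabs_right h) in Hx by lra.
  apply (Rmult_lt_compat_r h) in Hx; auto.
  rewrite Rmult_assoc, Rinv_l in Hx by lra. lra.
Qed.

Theorem lemma6p1 (N : nat) (p : R) (HN : (3 <= N)%nat) (Hp : 1 < p) :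
  forall M : R, 0 < M ->
  exists delta : R, 0 < delta /\
    forall (gamma : R) (u : R -> R),
      0 < gamma < delta ->
      is_IVP_solution N p gamma u ->
      forall r : R, 0 < r <= M -> u r <> 0.
Proof.
  intros M HM.
  assert (HN2 : (2 <= N)%nat) by lia.
  assert (HI : 3 <= INR N) by (replace 3 with (INR 3) by (simpl; ring); apply le_INR; auto).
  set (K := exp (Rabs (qexp N p) * (ln 2 + ln (1 + M^2)))).
  set (wM := exp (-(INR N - 2)/2 * ln (1 + M^2))).
  assert (HK : 0 < K) by apply exp_pos.
  assert (HwM : 0 < wM) by apply exp_pos.
  assert (HwM1 : wM <= 1).
  { apply Rle_trans with (wf N M). apply w_lower; [auto | lra]. apply w_le1; auto. }
  set (e0 := wM^2 / (12 * K * M^2)).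
  assert (He0 : 0 < e0).
  { unfold e0. apply Rdiv_lt_0_compat. nra. apply Rmult_lt_0_compat; nra. }
  exists (2/3 * Rpower e0 (/(p-1))). split.
  { unfold Rpower. pose proof (exp_pos (/ (p - 1) * ln e0)). lra. }
  intros g u [Hg0 Hgd] [Hu0 [Hlim [u1 [u2 Hd]]]] r [Hr0 HrM] Hur.
  set (m := INR N - 2).
  set (v := fun s => u s / wf N s).
  set (U := 3 * g / 2).
  assert (HU : 0 < U) by (unfold U; lra).
  assert (HRU : Rpower U (p - 1) <= e0).
  { apply Rle_trans with (Rpower (Rpower e0 (/(p-1))) (p-1)).
    - apply Rle_Rpower_l. lra. split; auto. unfold U; lra.
    - rewrite Rpower_mult. rewrite Rinv_l by lra. rewrite Rpower_1 by auto. lra. }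
  assert (HRU0 : 0 < Rpower U (p - 1)) by apply exp_pos.
  assert (HQ : K * (Rpower U (p - 1) * U) * M^2 / wM^2 <= g / 8).
  { apply Rle_trans with (K * (e0 * U) * M^2 / wM^2).
    - unfold Rdiv. apply Rmult_le_compat_r. apply Rlt_le, Rinv_0_lt_compat; nra.
      apply Rmult_le_compat_r. nra. apply Rmult_le_compat_l. lra.
      apply Rmult_le_compat_r; lra.
    - unfold e0, U. right. field. split; lra. }
  assert (Hm : 1 <= m) by (unfold m; lra).
  pose proof (lim_u u g Hlim Hu0) as Hl.
  assert (Hnear : forall eta, 0 < eta -> exists d, 0 < d /\ forall h, 0 < h < d ->
             Rabs (u h - g) < eta /\ Rabs (v h - g) < eta).
  { intros eta Heta. destruct (Hl (eta / 4) ltac:(lra)) as [a [Ha Hh]].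
    exists (Rmin a (Rmin 1 (Rmin (1 / (m + 1)) (eta / (2 * g * m + 1))))).
    split. { repeat apply Rmin_pos; try apply Rdiv_lt_0_compat; nra. }
    intros h [h0 hd].
    assert (h1 : h < a) by (eapply Rlt_le_trans; [exact hd| apply Rmin_l]).
    assert (h2 : h < 1) by (eapply Rlt_le_trans; [exact hd| eapply Rle_trans; [apply Rmin_r| apply Rmin_l]]).
    assert (h3 : h < 1 / (m + 1)) by (eapply Rlt_le_trans; [exact hd| eapply Rle_trans; [apply Rmin_r| eapply Rle_trans; [apply Rmin_r| apply Rmin_l]]]).
    assert (h4 : h < eta / (2 * g * m + 1)) by (eapply Rlt_le_trans; [exact hd| eapply Rle_trans; [apply Rmin_r| eapply Rle_trans; [apply Rmin_r| apply Rmin_r]]]).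
    specialize (Hh h (conj h0 h1)).
    assert (Hu : Rabs (u h - g) < eta / 4) by nra.
    split. lra.
    pose proof (w_near1 N h HN2) as Hw1. fold m in Hw1.
    pose proof (w_le1 N h HN2) as Hw2. pose proof (w_pos N h) as Hw3.
    assert (hm : m * h < 1) by (apply (Rmult_lt_compat_l (m+1)) in h3; [|lra]; field_simplify in h3; nra).
    assert (hg : 2 * g * m * h < eta) by (apply (Rmult_lt_compat_l (2*g*m+1)) in h4; [|nra]; field_simplify in h4; nra).
    assert (Hwh : 1/2 <= wf N h) by nra.
    assert (Ha2 : Rabs (u h - g * wf N h) < eta / 2).
    { replace (u h - g * wf N h) with ((u h - g) + g * (1 - wf N h)) by ring.
      eapply Rle_lt_trans. apply Rabs_triang. rewrite Rabs_mult, (Rabs_right g), (Rabs_right (1 - wf N h)) by lra.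
      nra. }
    unfold v. replace (u h / wf N h - g) with ((u h - g * wf N h) * / wf N h) by (field; lra).
    rewrite Rabs_mult, Rabs_inv, (Rabs_right (wf N h)) by lra.
    apply Rle_lt_trans with (Rabs (u h - g * wf N h) * 2).
    { apply Rmult_le_compat_l. apply Rabs_pos.
      apply (Rmult_le_reg_l (wf N h)). lra. rewrite Rinv_r by lra. lra. }
    lra. }
  assert (Hxi : forall eta rho, 0 < eta -> 0 < rho -> exists xi, 0 < xi < rho /\ Rabs (Wf N u u1 xi) < eta).
  { intros eta rho Heta Hrho.
    set (e1 := Rmin 1 (eta / 6)).
    assert (He1 : 0 < e1) by (apply Rmin_pos; lra).
    destruct (Hl e1 He1) as [a [Ha Hh]].
    set (eps := Rmin rho (Rmin a (Rmin 1 (eta / (2 * (g + 1) * m + 1)))) / 2).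
    assert (Heps : 0 < eps) by (unfold eps; apply Rdiv_lt_0_compat; [|lra]; repeat apply Rmin_pos; try lra; apply Rdiv_lt_0_compat; nra).
    assert (Hmin : 2 * eps <= rho /\ 2 * eps <= a /\ 2 * eps <= 1 /\ 2 * eps <= eta / (2 * (g + 1) * m + 1)).
    { unfold eps. repeat split.
      all: replace (2 * (Rmin rho (Rmin a (Rmin 1 (eta / (2 * (g + 1) * m + 1)))) / 2)) with (Rmin rho (Rmin a (Rmin 1 (eta / (2 * (g + 1) * m + 1))))) by field.
      apply Rmin_l. eapply Rle_trans; [apply Rmin_r|apply Rmin_l].
      eapply Rle_trans; [apply Rmin_r| eapply Rle_trans; [apply Rmin_r|apply Rmin_l]].
      eapply Rle_trans; [apply Rmin_r| eapply Rle_trans; [apply Rmin_r|apply Rmin_r]]. }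
    destruct (MVT_cor2 u u1 (eps / 2) eps ltac:(lra)) as [c [Hc1 Hc2]].
    { intros c Hc. apply (Hd c ltac:(lra)). }
    exists c. split. lra.
    pose proof (Hh eps ltac:(lra)) as Hh1. pose proof (Hh (eps/2) ltac:(lra)) as Hh2.
    assert (Hu1c : Rabs (u1 c) < 3 * e1).
    { assert (Rabs (u1 c) * (eps / 2) < 3 * e1 * (eps / 2)).
      { replace (Rabs (u1 c) * (eps / 2)) with (Rabs (u eps - u (eps/2))).
        2:{ rewrite Hc1, Rabs_mult, (Rabs_right (eps - eps/2)) by lra. field. }
        replace (u eps - u (eps/2)) with ((u eps - g) - (u (eps/2) - g)) by ring.
        eapply Rle_lt_trans. apply Rabs_triang. rewrite Rabs_Ropp. nra. }
      nra. }
    assert (He1' : e1 <= eta / 6) by apply Rmin_r.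
    assert (He1'' : e1 <= 1) by apply Rmin_l.
    assert (Huc : Rabs (u c - g) < 1) by (pose proof (Hh c ltac:(lra)); nra).
    assert (Hpc : 0 < c ^ (N - 1) <= 1).
    { split. apply pow_lt; lra. rewrite <- (pow1 (N - 1)). apply pow_incr. lra. }
    pose proof (w_le1 N c HN2). pose proof (w_pos N c).
    assert (Hw1c : Rabs (w1f N c) <= m * c).
    { unfold w1f. fold m. unfold Rdiv. rewrite !Rabs_mult, Rabs_Ropp, Rabs_inv, (Rabs_right m), (Rabs_right c), (Rabs_right (wf N c)), (Rabs_right (1 + c^2)) by nra.
      apply Rle_trans with (m * c * 1 * 1). 2: lra.
      apply Rmult_le_compat.
      - apply Rmult_le_pos; [apply Rmult_le_pos|]; lra.
      - apply Rlt_le, Rinv_0_lt_compat; nra.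
      - apply Rmult_le_compat_l; [apply Rmult_le_pos|]; lra.
      - rewrite <- Rinv_1. apply Rinv_le_contravar; nra. }
    assert (Hmc : 2 * (g + 1) * m * c < eta).
    { assert (c < eta / (2 * (g + 1) * m + 1)) by lra.
      apply (Rmult_lt_compat_l (2 * (g + 1) * m + 1)) in H1; [|nra]. field_simplify in H1; nra. }
    unfold Wf. rewrite Rabs_mult, (Rabs_right (c ^ (N - 1))) by lra.
    assert (Rabs (wf N c * u1 c - u c * w1f N c) < eta).
    { eapply Rle_lt_trans. apply Rabs_triang. rewrite Rabs_Ropp, !Rabs_mult, (Rabs_right (wf N c)) by lra.
      assert (Rabs (u c) <= g + 1) by (pose proof (Rabs_triang_inv (u c) g) as Ht; rewrite (Rabs_right g) in Ht by lra; lra).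
      pose proof (Rabs_pos (u c)). pose proof (Rabs_pos (u1 c)). pose proof (Rabs_pos (w1f N c)).
      nra. }
    pose proof (Rabs_pos (wf N c * u1 c - u c * w1f N c)). nra. }
  assert (Hv : forall s, 0 < s -> derivable_pt_lim v s (Wf N u u1 s / (s ^ (N - 1) * (wf N s)^2))).
  { intros s Hs. pose proof (w_pos N s).
    assert (Hd0 := derivable_pt_lim_div u (wf N) s (u1 s) (w1f N s) (proj1 (Hd s Hs)) (w_deriv N s) ltac:(lra)).
    assert (0 < s ^ (N - 1)) by (apply pow_lt; lra).
    replace (Wf N u u1 s / (s ^ (N - 1) * (wf N s)^2)) with ((u1 s * wf N s - w1f N s * u s) / (wf N s)²).
    exact Hd0. unfold Wf, Rsqr. field. lra. }
  set (B := fun s => 0 < s <= M /\ g / 2 <= Rabs (v s - g)).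
  assert (HBr : B r).
  { split. lra. unfold v. rewrite Hur. unfold Rdiv. rewrite Rmult_0_l, Rminus_0_l, Rabs_Ropp, Rabs_right; lra. }
  set (E := fun x => B (- x)).
  assert (HEb : bound E).
  { exists 0. intros x Hx. destruct Hx as [[Hx _] _]. lra. }
  assert (HEr : E (- r)) by (unfold E; replace (- - r) with r by ring; exact HBr).
  destruct (completeness E HEb (ex_intro _ (- r) HEr)) as [mu [Hub Hlub]].
  set (t := - mu).
  assert (Htlb : forall s, B s -> t <= s).
  { intros s Hs. assert (E (- s)) by (unfold E; replace (- - s) with s by ring; auto). pose proof (Hub _ H). unfold t. lra. }
  assert (Htgl : forall y, (forall s, B s -> y <= s) -> y <= t).
  { intros y Hy. assert (mu <= - y).
    { apply Hlub. intros x Hx. specialize (Hy (- x) Hx). lra. }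
    unfold t. lra. }
  assert (Htr : t <= r) by (apply Htlb; auto).
  assert (Ht0 : 0 < t).
  { destruct (Hnear (g / 2) ltac:(lra)) as [d [Hd0 Hdd]].
    apply Rlt_le_trans with d; auto. apply Htgl. intros s [[Hs0 HsM] Hs].
    destruct (Rlt_le_dec s d) as [h|h]; auto.
    destruct (Hdd s (conj Hs0 h)). lra. }
  assert (Hgood : forall s, 0 < s < t -> g / 2 < v s < 3 * g / 2 /\ 0 < u s <= U).
  { intros s Hs.
    assert (Hv1 : Rabs (v s - g) < g / 2).
    { destruct (Rlt_le_dec (Rabs (v s - g)) (g / 2)) as [h|h]; auto.
      assert (B s) by (split; [lra|exact h]). pose proof (Htlb s H). lra. }
    apply Rabs_def2 in Hv1. pose proof (w_pos N s). pose proof (w_le1 N s HN2).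
    assert (u s = v s * wf N s) by (unfold v; field; lra).
    split. lra. rewrite H1. unfold U. split; nra. }
  assert (HtM : t <= M) by lra.
  assert (HW : forall s, 0 < s < t -> Rabs (Wf N u u1 s) <= K * (Rpower U (p - 1) * U) * s ^ N).
  { intros s Hs. apply le_eps. intros eta Heta.
    destruct (Hxi eta s Heta ltac:(lra)) as [xi [Hxi1 Hxi2]].
    destruct (MVT_cor2 (Wf N u u1)
      (fun c => - c ^ (N - 1) * Rpower (Aw c) (- qexp N p) * powsgn p (u c) * wf N c) xi s ltac:(lra))
      as [c [Hc1 Hc2]].
    { intros c Hc. destruct (Hd c ltac:(lra)) as [Hd1 [Hd2 Hd3]]. apply (W_deriv N p u u1 u2); auto; lra. }
    destruct (Hgood c ltac:(lra)) as [_ [Huc0 HucU]].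
    assert (HK1 : Rpower (Aw c) (- qexp N p) <= K) by (apply K_bound; lra).
    assert (HK0 : 0 < Rpower (Aw c) (- qexp N p)) by apply exp_pos.
    assert (Hps : 0 < powsgn p (u c) <= Rpower U (p - 1) * U).
    { unfold powsgn. rewrite Rabs_right by lra. split.
      apply Rmult_lt_0_compat; auto. apply exp_pos.
      apply Rmult_le_compat; try lra. apply Rlt_le, exp_pos. apply Rle_Rpower_l; lra. }
    pose proof (w_pos N c). pose proof (w_le1 N c HN2).
    assert (Hcp : 0 < c ^ (N - 1) <= s ^ (N - 1)) by (split; [apply pow_lt; lra| apply pow_incr; lra]).
    assert (HsN : s ^ N = s ^ (N - 1) * s).
    { replace N with (S (N - 1)) at 1 by lia. simpl. ring. }
    assert (Hdiff : Rabs (Wf N u u1 s - Wf N u u1 xi) <= K * (Rpower U (p - 1) * U) * s ^ N).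
    { rewrite Hc1. rewrite Rabs_mult, (Rabs_right (s - xi)) by lra.
      set (P := c ^ (N - 1)) in *. set (A1 := Rpower (Aw c) (- qexp N p)) in *.
      set (F := powsgn p (u c)) in *. set (W0 := wf N c) in *. set (RU := Rpower U (p - 1) * U) in *.
      assert (0 < RU) by (unfold RU; nra). clearbody P A1 F W0 RU.
      replace (- P * A1 * F * W0) with (- (P * A1 * F * W0)) by ring. rewrite Rabs_Ropp.
      rewrite (Rabs_right (P * A1 * F * W0)). 2:{ apply Rle_ge. repeat apply Rmult_le_pos. all: lra. }
      rewrite HsN.
      assert (P * A1 * F * W0 <= s ^ (N - 1) * K * RU * 1).
      { apply Rmult_le_compat; try lra. repeat apply Rmult_le_pos; lra.
        apply Rmult_le_compat; try lra. apply Rmult_le_pos; lra.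
        apply Rmult_le_compat; lra. }
      assert (0 < s ^ (N - 1)) by lra.
      assert (0 <= P * A1 * F * W0) by (repeat apply Rmult_le_pos; lra).
      assert (0 < K * RU) by (apply Rmult_lt_0_compat; auto; unfold RU; nra).
      assert (P * A1 * F * W0 * (s - xi) <= s ^ (N - 1) * K * RU * 1 * s).
      { apply Rmult_le_compat; lra. }
      lra. }
    pose proof (Rabs_triang_inv (Wf N u u1 s) (Wf N u u1 xi)). lra. }
  assert (Hvb : forall s, 0 < s < t -> Rabs (v s - g) <= g / 8).
  { intros s Hs. apply le_eps. intros eta Heta.
    destruct (Hnear eta Heta) as [d [Hd0 Hdd]].
    set (h := Rmin d s / 2).
    assert (Hh : 0 < h < s /\ h < d).
    { unfold h. pose proof (Rmin_l d s). pose proof (Rmin_r d s).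
      assert (0 < Rmin d s) by (apply Rmin_pos; lra). lra. }
    destruct (Hdd h ltac:(lra)) as [_ Hvh].
    destruct (MVT_cor2 v (fun c => Wf N u u1 c / (c ^ (N - 1) * (wf N c)^2)) h s ltac:(lra)) as [c [Hc1 Hc2]].
    { intros c Hc. apply Hv. lra. }
    assert (Hc : 0 < c < t) by lra.
    pose proof (HW c Hc) as HWc.
    assert (Hwc : wM <= wf N c) by (apply w_lower; [auto|lra]).
    assert (Hcp : 0 < c ^ (N - 1)) by (apply pow_lt; lra).
    assert (HcN : c ^ N = c ^ (N - 1) * c).
    { replace N with (S (N - 1)) at 1 by lia. simpl. ring. }
    set (RU := Rpower U (p - 1) * U) in *.
    assert (0 < RU) by (unfold RU; nra).
    set (P := c ^ (N - 1)) in *. set (W0 := wf N c) in *. set (Wc := Wf N u u1 c) in *.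
    clearbody RU P W0 Wc.
    assert (HW0 : 0 < W0) by lra. assert (HPW : 0 < P * W0 ^ 2) by (apply Rmult_lt_0_compat; [lra| apply pow_lt; lra]).
    assert (Hder : Rabs (Wc / (P * W0 ^ 2)) <= K * RU * M / wM ^ 2).
    { unfold Rdiv. rewrite Rabs_mult, Rabs_inv, (Rabs_right (P * W0 ^ 2)) by nra.
      apply Rle_trans with (K * RU * c ^ N * / (P * W0 ^ 2)).
      { apply Rmult_le_compat_r. apply Rlt_le, Rinv_0_lt_compat; lra. exact HWc. }
      rewrite HcN. replace (K * RU * (P * c) * / (P * W0 ^ 2)) with (K * RU * c / W0 ^ 2) by (field; lra).
      unfold Rdiv. apply Rmult_le_compat.
      - apply Rmult_le_pos; [apply Rmult_le_pos|]; lra.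
      - apply Rlt_le, Rinv_0_lt_compat; nra.
      - apply Rmult_le_compat_l; nra.
      - apply Rinv_le_contravar; nra. }
    assert (Hvs : Rabs (v s - v h) <= g / 8).
    { rewrite Hc1, Rabs_mult, (Rabs_right (s - h)) by lra.
      apply Rle_trans with (K * RU * M / wM ^ 2 * M).
      { apply Rmult_le_compat; try lra. apply Rabs_pos. }
      replace (K * RU * M / wM ^ 2 * M) with (K * RU * M ^ 2 / wM ^ 2) by (field; lra). exact HQ. }
    replace (v s - g) with ((v s - v h) + (v h - g)) by ring.
    pose proof (Rabs_triang (v s - v h) (v h - g)). lra. }
  destruct (cont_eps v t _ (Hv t Ht0) (g / 8) ltac:(lra)) as [d [Hd0 Hdd]].
  set (s' := Rmax (t / 2) (t - d / 2)).
  assert (Hs' : 0 < s' < t /\ Rabs (s' - t) < d).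
  { unfold s'. pose proof (Rmax_l (t/2) (t - d/2)). pose proof (Rmax_r (t/2) (t - d/2)).
    destruct (Rle_dec (t / 2) (t - d / 2)).
    - rewrite Rmax_right by lra. split. lra. rewrite Rabs_left by lra. lra.
    - rewrite Rmax_left by lra. split. lra. rewrite Rabs_left by lra. lra. }
  assert (Hvt : Rabs (v t - g) <= g / 4).
  { pose proof (Hdd s' (proj2 Hs')). pose proof (Hvb s' (proj1 Hs')).
    replace (v t - g) with (- (v s' - v t) + (v s' - g)) by ring.
    pose proof (Rabs_triang (- (v s' - v t)) (v s' - g)). rewrite Rabs_Ropp in H1. lra. }
  assert (t + d / 2 <= t).
  { apply Htgl. intros s [Hs1 Hs2].
    destruct (Rlt_le_dec s (t + d / 2)) as [h|h]; auto.
    assert (t <= s) by (apply Htlb; split; auto).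
    assert (Rabs (s - t) < d) by (rewrite Rabs_right; lra).
    pose proof (Hdd s H0).
    replace (v s - g) with ((v s - v t) + (v t - g)) in Hs2 by ring.
    pose proof (Rabs_triang (v s - v t) (v t - g)). lra. }
  lra.
Qed.
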